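(* Let $\mathbb V$ be the 2-vector space of a 2-term complex $V_1\xrightarrow{\mathrm d}V_0$ and let $L\subset\mathfrak{gl}(\mathbb V)\oplus\mathbb V$ be a maximal isotropic 2-sub-vector space with characteristic pair $(\mathcal D,\pi)$, so that $L=\{X+\pi(\xi)+\xi: X\in\mathcal D,\ \xi\in\mathcal D^0\}$. Then $L$ is a Dirac structure of the omni-Lie 2-algebra if and only if, for all $\xi,\eta\in\mathcal D^0$ (both objects or both morphisms): (1) $\mathcal D$ is a sub-Lie 2-algebra of $\mathfrak{gl}(\mathbb V)$; (2) $\pi\big(\pi(\xi)(\eta)\big)-[\pi(\xi),\pi(\eta)]\in\mathcal D$; (3) $\pi(\xi)(\eta)\in\mathcal D^0$.
   Context: All vector spaces are finite-dimensional over $\mathbb R$. For a 2-term complex $V_1\xrightarrow{\mathrm d}V_0$, $\mathbb V$ has objects $V_0$, morphisms $V_0\oplus V_1$ ($u+m$), $s(u+m)=u$, $t(u+m)=u+\mathrm dm$. Let $\mathrm{End}^0_{\mathrm d}(\mathbb V)=\{A=(A_0,A_1):A_0\mathrm d=\mathrm dA_1\}$, $\mathrm{End}^1(\mathbb V)=\mathrm{Hom}(V_0,V_1)$, $\delta\phi=(\mathrm d\phi,\phi\mathrm d)$; brackets $[A,B]$ componentwise commutator, $[A,\phi]=-[\phi,A]=A_1\phi-\phi A_0$, $[\phi,\psi]_\delta=\phi\mathrm d\psi-\psi\mathrm d\phi$. The strict Lie 2-algebra $\mathfrak{gl}(\mathbb V)$ has objects $\mathrm{End}^0_{\mathrm d}(\mathbb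 V)$, morphisms $A+\phi$, $s(A+\phi)=A$, $t(A+\phi)=A+\delta\phi$, bracket $[A+\phi,B+\psi]=[A,B]+[\phi,\psi]_\delta+[A,\psi]+[\phi,B]$, and acts on $\mathbb V$ by $A(u)=A_0u$, $(A+\phi)(u+m)=A_0u+(A_1m+\phi(u+\mathrm dm))$. A 2-sub-vector space has subspaces of objects and morphisms with restricted structure maps; a sub-Lie 2-algebra of $\mathfrak{gl}(\mathbb V)$ is a 2-sub-vector space closed under the bracket. The omni-Lie 2-algebra is $\mathfrak{gl}(\mathbb V)\oplus\mathbb V$ with pairing $\langle A+\phi+u+m,B+\psi+v+n\rangle=\tfrac12((A+\phi)(v+n)+(B+\psi)(u+m))$ (objects: $\tfrac12(A(v)+B(u))$) and bracket $[\![A+\phi+u+m,B+\psi+v+n]\!]=[A+\phi,B+\psi]+\tfrac12((A+\phi)(v+n)-(B+\psi)(u+m))$ (objects: $[A,B]+\tfrac12(A(v)-B(u))$). For a 2-sub-vector space $L$, $L^\perp=\{e:\langle e,l\rangle=0\ \forall l\in L\}$; $L$ is maximal isotropic if $L=L^\perp$, and a Dirac structure if moreover closed under $[\![\cdot,\cdot]\!]$. Characteristic pair: for maximal isotropic $L$, put $\mathcal D=L\cap\mathfrak{gl}(\mathbb V)$ and $\mathcal D^0=\{\xi\in\mathbb V: X(\xi)=0\ \forall X\in\mathcal D\}$ (levelwise: objects annihilated by all objects of $\mathcal D$, morphisms annihilated by all morphisms of $\mathcal D$); a characteristic pair is $(\mathcal D,\pi)$ where $\pi:\mathbb V\to\mathfrak{gl}(\mathbb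 V)$ is a linear functor with $\pi(\xi)(\eta)=-\pi(\eta)(\xi)$ for $\xi,\eta\in\mathcal D^0$ and $L=\{X+\pi(\xi)+\xi:X\in\mathcal D,\xi\in\mathcal D^0\}$ (such $\pi$ always exists). *)

(* Defs.v *)
From HB Require Import structures.
From mathcomp Require Import all_boot all_order all_algebra.
Set Implicit Arguments. Unset Strict Implicit. Unset Printing Implicit Defensive.
Import Order.TTheory GRing.Theory Num.Theory.
Local Open Scope ring_scope.

Definition subspace (R : nzRingType) (T : lmodType R) (P : T -> Prop) : Prop :=
  P 0 /\ forall (a : R) (x y : T), P x -> P y -> P (a *: x + y).

Definition linmap (R : nzRingType) (U W : lmodType R) (f : U -> W) : Prop :=
  forall (a : R) (x y : U), f (a *: x + y) = a *: f x + f y.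

(* A 2-sub-vector space of a 2-vector space whose objects are the elements of
   an ambient predicate ambO in O, morphisms the elements of ambM in M, with
   source s, target t, identity i and composition comp (comp f g = f o g,
   defined when t g = s f). *)
Definition sub2 (R : nzRingType) (O M : lmodType R) (ambO : O -> Prop) (ambM : M -> Prop)
  (s t : M -> O) (i : O -> M) (comp : M -> M -> M) (P0 : O -> Prop) (P1 : M -> Prop) : Prop :=
  [/\ subspace P0 /\ subspace P1,
      (forall x, P0 x -> ambO x) /\ (forall f, P1 f -> ambM f),
      (forall f, P1 f -> P0 (s f) /\ P0 (t f)),
      (forall x, P0 x -> P1 (i x)) &
      (forall f g, P1 f -> P1 g -> t g = s f -> P1 (comp f g))].

Section Omni.
Variables (R : realFieldType) (V0 V1 : vectType R) (d : 'Hom(V1, V0)).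

(* candidates for objects of gl(V): pairs (A0, A1) *)
Definition End0 := ('End(V0) * 'End(V1))%type.
(* morphisms of gl(V): A + phi *)
Definition glMor := (End0 * 'Hom(V0, V1))%type.
(* morphisms of V: u + m *)
Definition VMor := (V0 * V1)%type.
Definition OObj := (End0 * V0)%type.
Definition OMor := (glMor * VMor)%type.

Definition isEnd0 (A : End0) : Prop := (A.1 \o d)%VF = (d \o A.2)%VF.

Definition delta (phi : 'Hom(V0, V1)) : End0 := ((d \o phi)%VF, (phi \o d)%VF).

Definition brE (A B : End0) : End0 :=
  ((A.1 \o B.1)%VF - (B.1 \o A.1)%VF, (A.2 \o B.2)%VF - (B.2 \o A.2)%VF).
(* [A, phi] = A1 phi - phi A0 ; [phi, B] = - [B, phi] *)
Definition brEH (A : End0) (phi : 'Hom(V0, V1)) : 'Hom(V0, V1) :=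
  (A.2 \o phi)%VF - (phi \o A.1)%VF.
Definition brHH (phi psi : 'Hom(V0, V1)) : 'Hom(V0, V1) :=
  (phi \o d \o psi)%VF - (psi \o d \o phi)%VF.
Definition brgl (X Y : glMor) : glMor :=
  (brE X.1 Y.1, brHH X.2 Y.2 + brEH X.1 Y.2 - brEH Y.1 X.2).

Definition actO (A : End0) (u : V0) : V0 := A.1 u.
Definition actM (X : glMor) (xi : VMor) : VMor :=
  (X.1.1 xi.1, X.1.2 xi.2 + X.2 (xi.1 + d xi.2)).

Definition glS (X : glMor) : End0 := X.1.
Definition glT (X : glMor) : End0 := X.1 + delta X.2.
Definition glI (A : End0) : glMor := (A, 0).
Definition glC (X Y : glMor) : glMor := (Y.1, Y.2 + X.2).

Definition VS (xi : VMor) : V0 := xi.1.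
Definition VT (xi : VMor) : V0 := xi.1 + d xi.2.
Definition VI (u : V0) : VMor := (u, 0).
Definition VC (xi eta : VMor) : VMor := (eta.1, eta.2 + xi.2).

Definition OS (e : OMor) : OObj := (glS e.1, VS e.2).
Definition OT (e : OMor) : OObj := (glT e.1, VT e.2).
Definition OI (x : OObj) : OMor := (glI x.1, VI x.2).
Definition OC (e f : OMor) : OMor := (glC e.1 f.1, VC e.2 f.2).

Definition ambO (x : OObj) : Prop := isEnd0 x.1.
Definition ambM (e : OMor) : Prop := isEnd0 e.1.1.

Definition pairO (e f : OObj) : V0 := 2^-1 *: (actO e.1 f.2 + actO f.1 e.2).
Definition pairM (e f : OMor) : VMor := 2^-1 *: (actM e.1 f.2 + actM f.1 e.2).
Definition brO (e f : OObj) : OObj := (brE e.1 f.1, 2^-1 *: (actO e.1 f.2 - actO f.1 e.2)).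
Definition brM (e f : OMor) : OMor := (brgl e.1 f.1, 2^-1 *: (actM e.1 f.2 - actM f.1 e.2)).

Definition sub2_omni (L0 : OObj -> Prop) (L1 : OMor -> Prop) : Prop :=
  sub2 ambO ambM OS OT OI OC L0 L1.

Definition max_isotropic (L0 : OObj -> Prop) (L1 : OMor -> Prop) : Prop :=
  [/\ sub2_omni L0 L1,
      (forall e, L0 e <-> (ambO e /\ forall l, L0 l -> pairO e l = 0)) &
      (forall e, L1 e <-> (ambM e /\ forall l, L1 l -> pairM e l = 0))].

Definition dirac (L0 : OObj -> Prop) (L1 : OMor -> Prop) : Prop :=
  [/\ max_isotropic L0 L1,
      (forall e f, L0 e -> L0 f -> L0 (brO e f)) &
      (forall e f, L1 e -> L1 f -> L1 (brM e f))].

Definition sub_Lie2 (D0 : End0 -> Prop) (D1 : glMor -> Prop) : Prop :=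
  [/\ sub2 isEnd0 (fun X : glMor => isEnd0 X.1) glS glT glI glC D0 D1,
      (forall A B, D0 A -> D0 B -> D0 (brE A B)) &
      (forall X Y, D1 X -> D1 Y -> D1 (brgl X Y))].

(* D = L cap gl(V) *)
Definition Dobj (L0 : OObj -> Prop) (A : End0) : Prop := L0 (A, 0).
Definition Dmor (L1 : OMor -> Prop) (X : glMor) : Prop := L1 (X, 0).

Definition Ann0 (L0 : OObj -> Prop) (u : V0) : Prop :=
  forall A, Dobj L0 A -> actO A u = 0.
Definition Ann1 (L1 : OMor -> Prop) (xi : VMor) : Prop :=
  forall X, Dmor L1 X -> actM X xi = 0.

Definition lin_functor (p0 : V0 -> End0) (p1 : VMor -> glMor) : Prop :=
  [/\ linmap p0 /\ linmap p1,
      (forall u, isEnd0 (p0 u)) /\ (forall xi, isEnd0 (p1 xi).1),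
      (forall xi, glS (p1 xi) = p0 (VS xi)) /\ (forall xi, glT (p1 xi) = p0 (VT xi)),
      (forall u, p1 (VI u) = glI (p0 u)) &
      (forall xi eta, VT eta = VS xi -> p1 (VC xi eta) = glC (p1 xi) (p1 eta))].

Definition char_pair (L0 : OObj -> Prop) (L1 : OMor -> Prop)
  (p0 : V0 -> End0) (p1 : VMor -> glMor) : Prop :=
  [/\ lin_functor p0 p1,
      (forall xi eta, Ann0 L0 xi -> Ann0 L0 eta -> actO (p0 xi) eta = - actO (p0 eta) xi),
      (forall xi eta, Ann1 L1 xi -> Ann1 L1 eta -> actM (p1 xi) eta = - actM (p1 eta) xi),
      (forall e, L0 e <-> exists X xi, [/\ Dobj L0 X, Ann0 L0 xi & e = (X + p0 xi, xi)]) &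
      (forall e, L1 e <-> exists X xi, [/\ Dmor L1 X, Ann1 L1 xi & e = (X + p1 xi, xi)])].

End Omni.

(* Main.v *)
Require Import Defs.
From HB Require Import structures.
From mathcomp Require Import all_boot all_order all_algebra.
Set Implicit Arguments. Unset Strict Implicit. Unset Printing Implicit Defensive.
Import Order.TTheory GRing.Theory Num.Theory.
Local Open Scope ring_scope.

Section S.
Variables (R : realFieldType) (V0 V1 : vectType R) (d : 'Hom(V1, V0)).

Lemma half_double (W : lmodType R) (a : W) : 2^-1 *: (a + a) = a.
Proof.
by rewrite -mulr2n -scaler_nat scalerA mulVf ?scale1r // pnatr_eq0.
Qed.

Lemma isEnd0D (A B : End0 V0 V1) : isEnd0 d A -> isEnd0 d B -> isEnd0 d (A + B).
Proof.
rewrite /isEnd0 => HA HB; apply/lfunP => v.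
by rewrite !comp_lfunE /= !add_lfunE -!comp_lfunE HA HB !comp_lfunE linearD.
Qed.

Lemma isEnd0N (A : End0 V0 V1) : isEnd0 d A -> isEnd0 d (- A).
Proof.
rewrite /isEnd0 => HA; apply/lfunP => v.
by rewrite !comp_lfunE /= !opp_lfunE -!comp_lfunE HA !comp_lfunE linearN.
Qed.

Lemma isEnd0B (A B : End0 V0 V1) : isEnd0 d A -> isEnd0 d B -> isEnd0 d (A - B).
Proof. by move=> HA HB; apply: isEnd0D => //; apply: isEnd0N. Qed.

Lemma isEnd0_br (A B : End0 V0 V1) : isEnd0 d A -> isEnd0 d B -> isEnd0 d (brE A B).
Proof.
rewrite /isEnd0 => HA HB; apply/lfunP => v.
rewrite !comp_lfunE /= !add_lfunE !opp_lfunE !comp_lfunE.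
have hA x : A.1 (d x) = d (A.2 x) by rewrite -!comp_lfunE HA.
have hB x : B.1 (d x) = d (B.2 x) by rewrite -!comp_lfunE HB.
by rewrite hA hB hA hB linearB.
Qed.

Lemma actMD (X Y : glMor V0 V1) th : actM d (X + Y) th = actM d X th + actM d Y th.
Proof.
rewrite /actM -[(X+Y).1.1]/(X.1.1 + Y.1.1) -[(X+Y).1.2]/(X.1.2 + Y.1.2) -[(X+Y).2]/(X.2 + Y.2).
by rewrite !add_lfunE addrACA.
Qed.

Lemma actMN (X : glMor V0 V1) th : actM d (- X) th = - actM d X th.
Proof.
rewrite /actM -[(-X).1.1]/(- X.1.1) -[(-X).1.2]/(- X.1.2) -[(-X).2]/(- X.2).
by rewrite !opp_lfunE -opprD.
Qed.

Lemma actMB (X Y : glMor V0 V1) th : actM d (X - Y) th = actM d X th - actM d Y th.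
Proof. by rewrite actMD actMN. Qed.

Lemma actM0 (X : glMor V0 V1) : actM d X 0 = 0.
Proof. rewrite /actM /= !raddf0 addr0 raddf0 addr0. by []. Qed.

Lemma actOD (A B : End0 V0 V1) u : actO (A + B) u = actO A u + actO B u.
Proof. by rewrite /actO /= add_lfunE. Qed.
Lemma actOB (A B : End0 V0 V1) u : actO (A - B) u = actO A u - actO B u.
Proof. by rewrite /actO /= add_lfunE opp_lfunE. Qed.

Lemma actO_br (A B : End0 V0 V1) u :
  actO (brE A B) u = actO A (actO B u) - actO B (actO A u).
Proof. by rewrite /actO /= add_lfunE opp_lfunE !comp_lfunE. Qed.

Lemma lfD (U W : vectType R) (f : 'Hom(U,W)) a b : f (a + b) = f a + f b.
Proof. exact: linearD. Qed.
Lemma lfN (U W : vectType R) (f : 'Hom(U,W)) a : f (- a) = - f a.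
Proof. exact: linearN. Qed.
Lemma lf0 (U W : vectType R) (f : 'Hom(U,W)) : f 0 = 0.
Proof. exact: linear0. Qed.

Lemma pairB (a c : V0) (b e: V1) : (a,b) - (c,e) = (a - c, b - e) :> VMor V0 V1.
Proof. by []. Qed.

Lemma actM_br (X Y : glMor V0 V1) th : isEnd0 d X.1 -> isEnd0 d Y.1 ->
  actM d (brgl d X Y) th = actM d X (actM d Y th) - actM d Y (actM d X th).
Proof.
rewrite /isEnd0 => HA HB.
have hA x : X.1.1 (d x) = d (X.1.2 x) by rewrite -!comp_lfunE HA.
have hB x : Y.1.1 (d x) = d (Y.1.2 x) by rewrite -!comp_lfunE HB.
case: th => u m; rewrite /actM /brgl /brE /brEH /brHH /=.
rewrite !add_lfunE !opp_lfunE !add_lfunE !opp_lfunE !comp_lfunE pairB.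
congr (_, _).
rewrite !lfD !hA !hB !opprD !opprK !addrA.
by rewrite [LHS](ACl (1*7*8*13*14*3*4*2*11*12*9*10*5*6)).
Qed.

Lemma pairZD0 (A B : End0 V0 V1) (x y : V0) a : a *: ((A, x) : OObj V0 V1) + (B, y) = (a *: A + B, a *: x + y).
Proof. by []. Qed.
Lemma pairZD1 (A B : glMor V0 V1) (x y : VMor V0 V1) a : a *: ((A, x) : OMor V0 V1) + (B, y) = (a *: A + B, a *: x + y).
Proof. by []. Qed.

Lemma subD (T : lmodType R) (P : T -> Prop) x y : subspace P -> P x -> P y -> P (x + y).
Proof. by move=> [_ H] Hx Hy; have := H 1 _ _ Hx Hy; rewrite scale1r. Qed.
Lemma subN (T : lmodType R) (P : T -> Prop) x : subspace P -> P x -> P (- x).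
Proof. by move=> [H0 H] Hx; have := H (-1) _ _ Hx H0; rewrite scaleN1r addr0. Qed.
Lemma subB (T : lmodType R) (P : T -> Prop) x y : subspace P -> P x -> P y -> P (x - y).
Proof. by move=> HP Hx Hy; apply: subD => //; apply: subN. Qed.

Lemma Dobj_sub (L0 : OObj V0 V1 -> Prop) : subspace L0 -> subspace (Dobj L0).
Proof.
move=> [H0 H]; split; first exact: H0.
move=> a A B HA HB; have := H a _ _ HA HB; by rewrite /Dobj pairZD0 scaler0 addr0.
Qed.
Lemma Dmor_sub (L1 : OMor V0 V1 -> Prop) : subspace L1 -> subspace (Dmor L1).
Proof.
move=> [H0 H]; split; first exact: H0.
move=> a A B HA HB; have := H a _ _ HA HB; by rewrite /Dmor pairZD1 scaler0 addr0.
Qed.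

Lemma actO0 (A : End0 V0 V1) : actO A 0 = 0.
Proof. exact: lf0. Qed.
End S.
Unset Implicit Arguments.

Theorem mainTheorem8 (R : realFieldType) (V0 V1 : vectType R) (d : 'Hom(V1, V0))
  (L0 : OObj V0 V1 -> Prop) (L1 : OMor V0 V1 -> Prop)
  (p0 : V0 -> End0 V0 V1) (p1 : VMor V0 V1 -> glMor V0 V1) :
  max_isotropic d L0 L1 ->
  char_pair d L0 L1 p0 p1 ->
  dirac d L0 L1 <->
  [/\ sub_Lie2 d (Dobj L0) (Dmor L1),
      (forall xi eta, Ann0 L0 xi -> Ann0 L0 eta ->
         Dobj L0 (p0 (actO (p0 xi) eta) - brE (p0 xi) (p0 eta))),
      (forall xi eta, Ann1 d L1 xi -> Ann1 d L1 eta ->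
         Dmor L1 (p1 (actM d (p1 xi) eta) - brgl d (p1 xi) (p1 eta))),
      (forall xi eta, Ann0 L0 xi -> Ann0 L0 eta -> Ann0 L0 (actO (p0 xi) eta)) &
      (forall xi eta, Ann1 d L1 xi -> Ann1 d L1 eta -> Ann1 d L1 (actM d (p1 xi) eta))].
Proof.
move=> HL HC.
have HL' := HL.
case: HL' => [[[HsL0 HsL1] [HaO HaM] Hst Hid Hcp] HiO HiM].
case: HC => [[_ [Hp0 Hp1] _ _ _] Hsk0 Hsk1 Hdec0 Hdec1].
have HD0 := Dobj_sub HsL0.
have HD1 := Dmor_sub HsL1.
have inL0 X xi : Dobj L0 X -> Ann0 L0 xi -> L0 (X + p0 xi, xi).
  by move=> HX Hxi; apply/Hdec0; exists X, xi.
have inL1 X xi : Dmor L1 X -> Ann1 d L1 xi -> L1 (X + p1 xi, xi).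
  by move=> HX Hxi; apply/Hdec1; exists X, xi.
have isoO W : isEnd0 d W -> (forall th, Ann0 L0 th -> actO W th = 0) -> Dobj L0 W.
  move=> HW HA; apply/HiO; split => // l /Hdec0 [Z [th [_ Hth ->]]].
  by rewrite /pairO /= HA // actO0 addr0 scaler0.
have isoM W : isEnd0 d W.1 -> (forall th, Ann1 d L1 th -> actM d W th = 0) -> Dmor L1 W.
  move=> HW HA; apply/HiM; split => // l /Hdec1 [Z [th [_ Hth ->]]].
  by rewrite /pairM /= HA // actM0 addr0 scaler0.
have VS0 : VS (0 : VMor V0 V1) = 0 by [].
have VT0 : VT d (0 : VMor V0 V1) = 0 by rewrite /VT lf0 addr0.
have VC0 : VC (0 : VMor V0 V1) 0 = 0 by rewrite /VC addr0.
split.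
  case=> _ HbO HbM.
  have P2O xi eta : Ann0 L0 xi -> Ann0 L0 eta ->
      exists X, [/\ Dobj L0 X, Ann0 L0 (actO (p0 xi) eta) &
                    brE (p0 xi) (p0 eta) = X + p0 (actO (p0 xi) eta)].
    move=> Hxi Heta.
    have := HbO _ _ (inL0 _ _ HD0.1 Hxi) (inL0 _ _ HD0.1 Heta).
    rewrite !add0r => /Hdec0 [X [z [HX Hz E]]].
    move: (congr1 fst E) (congr1 snd E) => /= E1 E2.
    move: E2; rewrite (Hsk0 eta) // opprK half_double => E2.
    by exists X; rewrite E1 E2.
  have P2M xi eta : Ann1 d L1 xi -> Ann1 d L1 eta ->
      exists X, [/\ Dmor L1 X, Ann1 d L1 (actM d (p1 xi) eta) &
                    brgl d (p1 xi) (p1 eta) = X + p1 (actM d (p1 xi) eta)].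
    move=> Hxi Heta.
    have := HbM _ _ (inL1 _ _ HD1.1 Hxi) (inL1 _ _ HD1.1 Heta).
    rewrite !add0r => /Hdec1 [X [z [HX Hz E]]].
    move: (congr1 fst E) (congr1 snd E) => /= E1 E2.
    move: E2; rewrite (Hsk1 eta) // opprK half_double => E2.
    by exists X; rewrite E1 E2.
  split.
  - split.
    + split; first by [].
      * by split=> [x /HaO | f /HaM].
      * move=> f Hf; have [H1 H2] := Hst _ Hf; split; first exact: H1.
        by move: H2; rewrite /OT VT0.
      * by move=> x Hx; exact: (Hid (x, 0) Hx).
      * move=> f g Hf Hg E; have := Hcp _ _ Hf Hg.
        rewrite /OC VC0; apply; by rewrite /OT /OS VT0 VS0 E.
    + move=> A B HA HB; have := HbO _ _ HA HB.
      by rewrite /brO /= !actO0 subrr scaler0.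
    + move=> X Y HX HY; have := HbM _ _ HX HY.
      by rewrite /brM /= !actM0 subrr scaler0.
  - move=> xi eta Hxi Heta; have [X [HX _ ->]] := P2O _ _ Hxi Heta.
    by rewrite opprD addrCA subrr addr0; apply: subN.
  - move=> xi eta Hxi Heta; have [X [HX _ ->]] := P2M _ _ Hxi Heta.
    by rewrite opprD addrCA subrr addr0; apply: subN.
  - by move=> xi eta Hxi Heta; have [X [_ H _]] := P2O _ _ Hxi Heta.
  - by move=> xi eta Hxi Heta; have [X [_ H _]] := P2M _ _ Hxi Heta.
case=> HLie H2O H2M H3O H3M.
case: HLie => [[_ [HDa0 HDa1] _ _ _] HbrE Hbrgl].
split => //.
- move=> e f /Hdec0 [X [xi [HX Hxi ->]]] /Hdec0 [Y [eta [HY Heta ->]]].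
  set z := actO (p0 xi) eta.
  have Hz : Ann0 L0 z := H3O _ _ Hxi Heta.
  apply/Hdec0; exists (brE (X + p0 xi) (Y + p0 eta) - p0 z), z; split => //.
  + apply: isoO.
    * apply: isEnd0B; last exact: Hp0.
      by apply: isEnd0_br; apply: isEnd0D => //; apply: HDa0.
    * move=> th Hth; rewrite actOB.
      have E : actO (p0 z) th = actO (brE (p0 xi) (p0 eta)) th.
        apply/eqP; rewrite -subr_eq0 -actOB; apply/eqP; exact: Hth _ (H2O _ _ Hxi Heta).
      rewrite E !actO_br !actOD (Hth _ HX) (Hth _ HY) !add0r.
      by rewrite (H3O _ _ Heta Hth _ HX) (H3O _ _ Hxi Hth _ HY) !add0r subrr.
  + rewrite /brO /= subrK !actOD (Heta _ HX) (Hxi _ HY) !add0r (Hsk0 eta) //.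
    by rewrite opprK half_double.
- move=> e f /Hdec1 [X [xi [HX Hxi ->]]] /Hdec1 [Y [eta [HY Heta ->]]].
  set z := actM d (p1 xi) eta.
  have Hz := H3M _ _ Hxi Heta.
  have hP := Hp1 xi; have hQ := Hp1 eta.
  have hXP : isEnd0 d (X + p1 xi).1 by apply: isEnd0D => //; apply: HDa1.
  have hYQ : isEnd0 d (Y + p1 eta).1 by apply: isEnd0D => //; apply: HDa1.
  apply/Hdec1; exists (brgl d (X + p1 xi) (Y + p1 eta) - p1 z), z; split => //.
  + apply: isoM.
    * change (isEnd0 d (brE (X + p1 xi).1 (Y + p1 eta).1 - (p1 z).1)).
      by apply: isEnd0B; [apply: isEnd0_br | apply: Hp1].
    * move=> th Hth; rewrite actMB.
      have E : actM d (p1 z) th = actM d (brgl d (p1 xi) (p1 eta)) th.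
        apply/eqP; rewrite -subr_eq0 -actMB; apply/eqP; exact: Hth _ (H2M _ _ Hxi Heta).
      rewrite E !actM_br // !actMD (Hth _ HX) (Hth _ HY) !add0r.
      by rewrite (H3M _ _ Heta Hth _ HX) (H3M _ _ Hxi Hth _ HY) !add0r subrr.
  + rewrite /brM /= subrK !actMD (Heta _ HX) (Hxi _ HY) !add0r (Hsk1 eta) //.
    by rewrite opprK half_double.
Qed.
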